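(* For every $y\in\mathcal S\times[-1,1]\times\mathcal S$ and all $p,q\in\Delta_d^{\mathcal S}$, \[ \ell^\Theta_{\mathrm C,\infty}\bigl(H(p,y),H(q,y)\bigr)\le\ell^\Theta_{\mathrm C,\infty}(p,q). \]
   Context: $\mathcal S=\{1,\dots,m\}$ finite. $\Theta=\{\theta_1<\dots<\theta_d\}$ with constant stride $\Delta>0$; $\Delta_d$ the probability simplex of $\mathbb R^d$; $\Delta_d^{\mathcal S}$ the set of families $(p_i)_{i\in\mathcal S}$, $p_i\in\Delta_d$. For $u\in\Delta_d$, $\eta^{u,0}:=\sum_ku_k\delta_{\theta_k}$. Categorical projection $\Pi^\Theta_{\mathrm C}$: $\delta_x\mapsto\delta_{\theta_1}$ if $x\le\theta_1$, $\delta_{\theta_d}$ if $x\ge\theta_d$, $\frac{\theta_{k+1}-x}{\Delta}\delta_{\theta_k}+\frac{x-\theta_k}{\Delta}\delta_{\theta_{k+1}}$ if $\theta_k\le x\le\theta_{k+1}$, extended linearly to probability laws. For $b\in\mathbb R$, $L_bu\in\Delta_d$ is defined by $\Pi^\Theta_{\mathrm C}(\text{law of }X+b,\ X\sim\eta^{u,0})=\eta^{L_bu,0}$. One-sample backup: for $y=(s,b,s')$, $H(p,y)=q$ with $q_u=p_u$ for $u\ne s$ and $q_s=L_bp_{s'}$. Coordinate Cramér metric: $F_u(\theta_k):=\sum_{j\le k}u_j$, $\ell^\Theta_{\mathrm C}(u,v)^2:=\Delta\sum_{k=1}^{d-1}(F_u(\theta_k)-F_v(\theta_k))^2$, $\ell^\Theta_{\mathrm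 C,\infty}(p,q):=\max_i\ell^\Theta_{\mathrm C}(p_i,q_i)$. *)

(* Defs.v *)
From HB Require Import structures.
From mathcomp Require Import all_boot all_order all_algebra.
Set Implicit Arguments. Unset Strict Implicit. Unset Printing Implicit Defensive.
Import Order.TTheory GRing.Theory Num.Theory.
Local Open Scope ring_scope.

Section Defs.
Variable R : rcfType.

(* Support Theta: theta_k = theta1 + k * Delta, k = 0, ..., d-1 (0-indexed). *)
Definition atom (theta1 Delta : R) (k : nat) : R := theta1 + k%:R * Delta.

Definition in_simplex (d : nat) (u : 'I_d -> R) : Prop :=
  (forall k, 0 <= u k) /\ \sum_(k < d) u k = 1.

Definition in_simplex_fam (m d : nat) (p : 'I_m -> 'I_d -> R) : Prop :=
  forall i, in_simplex (p i).

(* Categorical projection of the Dirac mass delta_x, coordinate j. *)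
Definition cat_proj_dirac (d : nat) (theta1 Delta : R) (x : R) (j : 'I_d) : R :=
  let th := atom theta1 Delta in
  if x <= th 0%N then ((j : nat) == 0%N)%:R
  else if th d.-1 <= x then ((j : nat) == d.-1)%:R
  else if (th j <= x) && (x <= th j.+1) then (th j.+1 - x) / Delta
  else if (0 < (j : nat))%N && (th j.-1 <= x) && (x <= th j)
       then (x - th j.-1) / Delta
  else 0.

(* L_b u : projection (extended linearly) of the law of X + b, X ~ sum_k u_k delta_{theta_k}. *)
Definition Lshift (d : nat) (theta1 Delta b : R) (u : 'I_d -> R) : 'I_d -> R :=
  fun j => \sum_(k < d) u k * cat_proj_dirac theta1 Delta (atom theta1 Delta k + b) j.

Definition backup (m d : nat) (theta1 Delta : R) (p : 'I_m -> 'I_d -> R)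
    (s : 'I_m) (b : R) (s' : 'I_m) : 'I_m -> 'I_d -> R :=
  fun u => if u == s then Lshift theta1 Delta b (p s') else p u.

Definition cdf (d : nat) (u : 'I_d -> R) (k : nat) : R :=
  \sum_(j < d | (j <= k)%N) u j.

(* Coordinate Cramer metric: sqrt(Delta * sum_{k=1}^{d-1} (F_u(theta_k)-F_v(theta_k))^2). *)
Definition cramer (d : nat) (Delta : R) (u v : 'I_d -> R) : R :=
  Num.sqrt (Delta * \sum_(k < d.-1) (cdf u k - cdf v k) ^+ 2).

(* Sup-Cramer metric over states (max of nonnegative reals; 0 if S empty). *)
Definition cramer_inf (m d : nat) (Delta : R) (p q : 'I_m -> 'I_d -> R) : R :=
  \big[Num.max/0]_(i < m) cramer Delta (p i) (q i).

End Defs.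

(* Main.v *)
Require Import Defs.
From mathcomp Require Import all_boot all_order all_algebra.
From mathcomp Require Import ring lra.
Import Order.TTheory GRing.Theory Num.Theory.
Local Open Scope ring_scope.

Section S.
Variable R : rcfType.

Definition hc (z : R) : R := if z <= 0 then 0 else if 1 <= z then 1 else z.

Lemma lefalse {a b : R} : b < a -> (a <= b) = false.
Proof. by move=> h; rewrite leNgt h. Qed.
Lemma letrue {a b : R} : a <= b -> (a <= b) = true.
Proof. by []. Qed.

Lemma hc0 (x : R) : x <= 0 -> hc x = 0.
Proof. by rewrite /hc => ->. Qed.
Lemma hc1 (x : R) : 1 <= x -> hc x = 1.
Proof. move=> h; rewrite /hc lefalse ?h //; lra. Qed.
Lemma hcid (x : R) : 0 <= x <= 1 -> hc x = x.
Proof.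
move=> /andP[h1 h2]; rewrite /hc; case: (lerP x 0) => h3; first lra.
case: (lerP 1 x) => h4 //; lra.
Qed.

Lemma hc_mono x y : x <= y -> hc x <= hc y.
Proof.
move=> h; case: (lerP x 0) => h1; first rewrite (hc0 _ h1).
- case: (lerP y 0) => h2; first by rewrite hc0.
  case: (lerP 1 y) => h3; first by rewrite hc1.
  rewrite hcid; lra.
case: (lerP 1 x) => h2; first by rewrite !hc1 //; lra.
rewrite (hcid x); last lra.
case: (lerP 1 y) => h3; first by rewrite hc1 //; lra.
rewrite hcid; lra.
Qed.

Lemma hc01 x : 0 <= hc x <= 1.
Proof.
case: (lerP x 0) => h1; first by rewrite hc0 //; lra.
case: (lerP 1 x) => h2; first by rewrite hc1 //; lra.
rewrite hcid; lra.
Qed.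

Lemma interior_val (t y : R) (jpos : bool) :
  0 < y -> 0 <= t -> (~~ jpos -> t = 0) ->
  (if (t <= y) && (y <= t + 1) then t + 1 - y
   else if jpos && (t - 1 <= y) && (y <= t) then y - (t - 1) else 0)
  = hc (t + 1 - y) - hc (t - y).
Proof.
move=> y0 t0 hj.
case: (ltrP y (t - 1)) => r1.
  rewrite ?(lefalse (a:=t)) ?andbF /=; last lra.
  rewrite !hc1; lra.
case: (ltrP y t) => r2.
  rewrite (ltW r2) andbT andbT.
  case: jpos hj => hj; last by have := hj isT; lra.
  rewrite /= hc1 ?hcid; lra.
case: (lerP y (t+1)) => r3.
  rewrite /= hcid ?hc0; lra.
rewrite /= ?(lefalse (a:=y)) ?andbF /=; last lra.
rewrite !hc0; lra.
Qed.

Variables (theta1 Delta : R).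
Hypothesis hD : 0 < Delta.

Definition yof (x : R) := (x - theta1) / Delta.

Lemma atom_le (n : nat) (x : R) : (atom theta1 Delta n <= x) = (n%:R <= yof x).
Proof. by rewrite /yof ler_pdivlMr // lerBrDl. Qed.
Lemma le_atom (n : nat) (x : R) : (x <= atom theta1 Delta n) = (yof x <= n%:R).
Proof. by rewrite /yof ler_pdivrMr // lerBlDl. Qed.

Lemma P_formula (d : nat) (x : R) (j : 'I_d) :
  cat_proj_dirac theta1 Delta x j =
  if yof x <= 0 then ((j : nat) == 0%N)%:R
  else if (d.-1)%:R <= yof x then ((j : nat) == d.-1)%:R
  else hc (j%:R + 1 - yof x) - hc (j%:R - yof x).
Proof.
rewrite /cat_proj_dirac le_atom atom_le.
case: ifP => // y0; case: ifP => // y1.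
rewrite !atom_le !le_atom -[(j.+1)%:R]natr1.
have e1 : (atom theta1 Delta j.+1 - x) / Delta = j%:R + 1 - yof x.
  rewrite /atom /yof -[(j.+1)%:R]natr1; field; exact: lt0r_neq0.
rewrite e1; set y := yof x.
have yp : 0 < y by rewrite ltNge y0.
case hj: (0 < j)%N.
- have ej : j.-1%:R = j%:R - 1 :> R.
    by rewrite -[in RHS](prednK hj) -natr1 addrK.
  have e2 : (x - atom theta1 Delta j.-1) / Delta = y - (j%:R - 1).
    by rewrite /y /yof /atom ej; field; exact: lt0r_neq0.
  rewrite e2 ej /=.
  have := interior_val (j%:R) y true yp (ler0n _ _).
  by apply.
- have j0 : (j : nat) = 0%N by case: (j : nat) hj.
  rewrite /=.
  have := interior_val (j%:R) y false yp (ler0n _ _).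
  by rewrite /=; apply; rewrite j0.
Qed.

Lemma cdf_P (d : nat) (x : R) (j : nat) : (j < d.-1)%N ->
  \sum_(i < d | (i <= j)%N) cat_proj_dirac theta1 Delta x i = hc (j%:R + 1 - yof x).
Proof.
move=> hj; case y0 : (yof x <= 0).
  rewrite (eq_bigr (fun i : 'I_d => ((i : nat) == 0%N)%:R)); last by move=> i _; rewrite P_formula y0.
  case: d hj => [|n] //= hj.
  rewrite (bigD1 ord0) //= big1 ?addr0 ?hc1 //.
    move: y0 => /idP y0; rewrite lerBrDl; have := ler0n R j; lra.
  by move=> i /andP[_]; rewrite -val_eqE /= => /negbTE ->.
case y1 : ((d.-1)%:R <= yof x).
  rewrite big1; last first.
    move=> i hi; rewrite P_formula y0 y1; case: eqP => // e; move: hi hj; rewrite e => h1 h2.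
    by have := leq_ltn_trans h1 h2; rewrite ltnn.
  rewrite hc0 //.
  have : (j.+1%:R <= d.-1%:R :> R) by rewrite ler_nat.
  rewrite -natr1; lra.
have yp : 0 < yof x by rewrite ltNge y0.
rewrite (eq_bigr (fun i : 'I_d => hc ((i:nat)%:R + 1 - yof x) - hc ((i:nat)%:R - yof x))); last by move=> i _; rewrite P_formula y0 y1.
have := big_ord_widen_cond d xpredT (fun i : nat => hc (i%:R + 1 - yof x) - hc (i%:R - yof x))
   (leq_trans hj (leq_pred d)).
have -> : \sum_(i < d | xpredT i && (i < j.+1)%N) (hc (i%:R + 1 - yof x) - hc (i%:R - yof x))
   = \sum_(i < d | (i <= j)%N) (hc (i%:R + 1 - yof x) - hc (i%:R - yof x)) by [].
move=> <-; rewrite -(big_mkord xpredT (fun i : nat => hc (i%:R + 1 - yof x) - hc (i%:R - yof x))).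
rewrite (telescope_sumr_eq (fun k : nat => hc (k%:R - yof x))) //.
  by rewrite natr1 (hc0 _ (_ : 0%:R - yof x <= 0)) ?subr0 //; lra.
by move=> k _; rewrite natr1.
Qed.

Lemma wcs (n : nat) (m a : 'I_n -> R) : (forall l, 0 <= m l) ->
  \sum_l m l <= 1 -> (\sum_l m l * a l) ^+ 2 <= \sum_l m l * a l ^+ 2.
Proof.
move=> m0 S1; set T := \sum_l m l * a l; set S := \sum_l m l.
have E : \sum_l m l * (a l - T) ^+ 2 = \sum_l m l * a l ^+ 2 - (2 * T) * T + T ^+ 2 * S.
  rewrite (eq_bigr (fun l => (m l * a l ^+ 2 - (2 * T) * (m l * a l)) + T ^+ 2 * m l));
    last by move=> l _; ring.
  by rewrite big_split sumrB /= -!mulr_sumr.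
have P : 0 <= \sum_l m l * (a l - T) ^+ 2.
  by apply: sumr_ge0 => l _; apply: mulr_ge0 => //; apply: sqr_ge0.
have Q : 0 <= T ^+ 2 * (1 - S) by apply: mulr_ge0; [apply: sqr_ge0| rewrite subr_ge0].
rewrite E in P; nra.
Qed.

Lemma tele_down (c : nat -> R) (n k : nat) : (k <= n)%N ->
  \sum_(l < n | (k <= l)%N) (c l - c l.+1) = c k - c n.
Proof.
move=> kn; rewrite -(big_geq_mkord k n xpredT (fun l => c l - c l.+1)).
rewrite (telescope_sumr_eq (fun l => - c l)) //; first by rewrite opprK addrC.
by move=> l _; rewrite opprK addrC.
Qed.

Section Key.
Variables (n : nat) (beta : R) (w : 'I_n.+1 -> R).
Hypothesis hw : \sum_k w k = 0.

Definition cc (j k : nat) : R := hc (j%:R + 1 - (k%:R + beta)).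
Definition mm (j l : nat) : R := cc j l - cc j l.+1.
Definition aa (l : nat) : R := \sum_(k < n.+1 | (k <= l)%N) w k.

Lemma mm_ge0 j l : 0 <= mm j l.
Proof. rewrite /mm /cc subr_ge0; apply: hc_mono; rewrite -natr1; lra. Qed.

Lemma step1 (j : nat) :
  \sum_(k < n.+1) w k * cc j k = \sum_(l < n) mm j l * aa l.
Proof.
have E k : (k < n.+1)%N -> cc j k = cc j n + \sum_(l < n | (k <= l)%N) mm j l.
  by move=> hk; rewrite /mm tele_down // addrC subrK.
rewrite (eq_bigr (fun k : 'I_n.+1 => w k * cc j n + \sum_(l < n | (k <= l)%N) w k * mm j l));
  last by move=> k _; rewrite E // mulrDr mulr_sumr.
rewrite big_split /= -mulr_suml hw mul0r add0r.
rewrite (exchange_big_dep xpredT) //=.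
apply: eq_bigr => l _; rewrite /aa mulr_sumr; apply: eq_bigr => k _; by rewrite mulrC.
Qed.

Lemma rowsum (j : nat) : \sum_(l < n) mm j l <= 1.
Proof.
have := @tele_down (cc j) n 0 (leq0n n).
rewrite (eq_bigl xpredT) // => ->.
have := hc01 (j%:R + 1 - (0%:R + beta)); have := hc01 (j%:R + 1 - (n%:R + beta)).
rewrite /cc; lra.
Qed.

Lemma colsum (l : nat) : \sum_(j < n) mm j l <= 1.
Proof.
set g := fun j : nat => hc (j%:R - (l%:R + beta)).
have := big_mkord xpredT (fun j => mm j l).
rewrite (eq_bigl xpredT) // => <-.
rewrite (telescope_sumr_eq g) //.
  have := hc01 (n%:R - (l%:R + beta)); have := hc01 (0%:R - (l%:R + beta)).
  rewrite /g; lra.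
move=> k _; rewrite /mm /cc /g -!natr1; congr (hc _ - hc _); ring.
Qed.

Lemma key :
  \sum_(j < n) (\sum_(k < n.+1) w k * cc j k) ^+ 2 <= \sum_(l < n) aa l ^+ 2.
Proof.
apply: (le_trans (y := \sum_(j < n) \sum_(l < n) mm j l * aa l ^+ 2)).
  apply: ler_sum => j _; rewrite step1.
  exact: (wcs _ (fun l : 'I_n => mm j l) (fun l : 'I_n => aa l) (fun l => mm_ge0 j l) (rowsum j)).
rewrite exchange_big /=; apply: ler_sum => l _.
rewrite -mulr_suml; apply: ler_piMl; [exact: sqr_ge0| exact: colsum].
Qed.
End Key.

Lemma cdf_L (d : nat) (b : R) (u : 'I_d -> R) (j : nat) : (j < d.-1)%N ->
  cdf (Lshift theta1 Delta b u) j = \sum_(k < d) u k * hc (j%:R + 1 - (k%:R + b / Delta)).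
Proof.
move=> hj; rewrite /cdf /Lshift (exchange_big_dep xpredT) //=.
apply: eq_bigr => k _; rewrite -mulr_sumr (eq_bigl (fun i : 'I_d => (i <= j)%N)) //.
rewrite cdf_P //; congr (_ * hc (_ - _)).
  rewrite /yof /atom; field; exact: lt0r_neq0.
by move=> i; rewrite andbT.
Qed.

Lemma cramer_L (d : nat) (b : R) (u v : 'I_d -> R) :
  \sum_k u k = 1 -> \sum_k v k = 1 ->
  cramer Delta (Lshift theta1 Delta b u) (Lshift theta1 Delta b v) <= cramer Delta u v.
Proof.
move=> su sv; case: d u v su sv => [|n] u v su sv.
  by rewrite /cramer !big_ord0.
rewrite /cramer; apply: ler_wsqrtr; apply: ler_wpM2l; first exact: ltW.
have hw : \sum_k (u k - v k) = 0 by rewrite sumrB su sv subrr.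
have := @key n (b / Delta) _ hw.
rewrite /= /aa /cc.
have -> : \sum_(j < n) (\sum_(k < n.+1) (u k - v k) * hc (j%:R + 1 - (k%:R + b / Delta))) ^+ 2
  = \sum_(j < n) (cdf (Lshift theta1 Delta b u) j - cdf (Lshift theta1 Delta b v) j) ^+ 2.
  apply: eq_bigr => j _; rewrite !cdf_L //= -sumrB.
  by congr (_ ^+ 2); apply: eq_bigr => k _; rewrite mulrBl.
have -> // : \sum_(l < n) (\sum_(k < n.+1 | (k <= l)%N) (u k - v k)) ^+ 2
  = \sum_(l < n) (cdf u l - cdf v l) ^+ 2.
by apply: eq_bigr => l _; rewrite /cdf sumrB.
Qed.
End S.

Theorem lemma2 (R : rcfType) (m d : nat) (theta1 Delta : R) (hDelta : 0 < Delta)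
    (s : 'I_m) (b : R) (s' : 'I_m) (hb : -1 <= b <= 1)
    (p q : 'I_m -> 'I_d -> R) (hp : in_simplex_fam p) (hq : in_simplex_fam q) :
  cramer_inf Delta (backup theta1 Delta p s b s') (backup theta1 Delta q s b s')
  <= cramer_inf Delta p q.
Proof.
rewrite /cramer_inf; apply: bigmax_le.
  apply: le_trans (le_bigmax _ _ s); exact: sqrtr_ge0.
move=> i _; rewrite /backup; case: eqP => _; last exact: le_bigmax.
apply: le_trans (le_bigmax _ _ s').
apply: cramer_L => //; [exact: (hp s').2 | exact: (hq s').2].
Qed.
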